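(* Let $A$, $Q$, $H\subseteq A^Q$ be non-empty finite sets, $n\ge3$, and $\mathcal F$ a clone with carrier $A$ satisfying $\Delta^s_n$, and suppose $H\in\mathrm{Inv}_Q\mathcal F$. Let $p,q\in Q$, $a\in H(p)$, $|H(q)|\ge n$, and suppose $H$ weakly separates $p$ from $q$ at the point $a$. Then $H$ strongly separates $p$ from $q$ at the point $a$.
   Context: $\mathcal O(A)=\bigcup_{n<\omega}A^{A^n}$; $\mathcal F_{[n]}=\mathcal F\cap A^{A^n}$; $\mathrm{ran}\,\mathbf x$ is the set of entries of $\mathbf x\in A^n$; $A^n_k=\{\mathbf x\in A^n:|\mathrm{ran}\,\mathbf x|=k\}$, $A^n_{<n}=\bigcup_{k<n}A^n_k$. A clone with carrier $A$ is a subset of $\mathcal O(A)$ containing all projections and closed under composition. For $f\in\mathcal O(A)_{[m]}$, $h_i\in A^Q$, $f(h_0,\dots,h_{m-1})$ is $q\mapsto f(h_0(q)\dots h_{m-1}(q))$; $\mathrm{Inv}_Q\mathcal F$ is the set of $H\subseteq A^Q$ closed under such compositions with $f\in\mathcal F$. $H(q)=\{h(q):h\in H\}$. $\mathcal F$ satisfies $\Delta^s_n$ if there is $i<n$ such that for every $\mathbf a\in A^n_n$ and $a\in\mathrm{ran}\,\mathbf a$ there is $s\in\mathcal F_{[n]}$ with $s(\mathbf a)=a$ and $s(\mathbf x)=x_i$ for all $\mathbf x\in A^n_{<n}$. $H$ weakly separates $p$ from $q$ at $a\in H(p)$ if there are $h_1,h_2\in H$ with $h_1(p)=h_2(p)=a$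 and $h_1(q)\ne h_2(q)$; $H$ strongly separates $p$ from $q$ at $a$ if for every $b\in H(q)$ there is $h\in H$ with $h(p)=a$, $h(q)=b$. *)

(* Defs.v *)
From mathcomp Require Import all_boot.
Set Implicit Arguments. Unset Strict Implicit. Unset Printing Implicit Defensive.

Definition op (A : Type) (n : nat) := ('I_n -> A) -> A.

Definition opset (A : Type) := forall n : nat, op A n -> Prop.

Definition is_clone (A : Type) (F : opset A) : Prop :=
  (forall (n : nat) (i : 'I_n), F n (fun x => x i)) /\
  (forall (n m : nat) (f : op A m) (gs : 'I_m -> op A n),
      F m f -> (forall j, F n (gs j)) ->
      F n (fun x => f (fun j => gs j x))).

Definition ran (A : finType) (n : nat) (x : 'I_n -> A) : {set A} :=
  [set x i | i : 'I_n].

Definition Delta_s (A : finType) (F : opset A) (n : nat) : Prop :=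
  exists i : 'I_n,
    forall (a : 'I_n -> A), #|ran a| = n ->
    forall c, c \in ran a ->
      exists s : op A n, F n s /\ s a = c /\
        (forall x : 'I_n -> A, #|ran x| < n -> s x = x i).

Definition Inv (A Q : finType) (F : opset A) (H : {set {ffun Q -> A}}) : Prop :=
  forall (m : nat) (f : op A m) (hs : 'I_m -> {ffun Q -> A}),
    F m f -> (forall j, hs j \in H) ->
    [ffun q => f (fun j => hs j q)] \in H.

Definition Hat (A Q : finType) (H : {set {ffun Q -> A}}) (q : Q) : {set A} :=
  [set (h : {ffun Q -> A}) q | h in H].

Definition weakly_separates (A Q : finType) (H : {set {ffun Q -> A}})
  (p q : Q) (a : A) : Prop :=
  exists h1 h2, [/\ h1 \in H, h2 \in H, h1 p = a, h2 p = a & h1 q != h2 q].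

Definition strongly_separates (A Q : finType) (H : {set {ffun Q -> A}})
  (p q : Q) (a : A) : Prop :=
  forall b, b \in Hat H q -> exists2 h, h \in H & h p = a /\ h q = b.

(* Main.v *)
Require Import Defs.
From mathcomp Require Import all_boot zify.
From mathcomp Require Import fingroup perm.

Theorem lemma4 (A Q : finType) (H : {set {ffun Q -> A}}) (n : nat)
  (F : opset A) (p q : Q) (a : A) :
  0 < #|A| -> 0 < #|Q| -> H != set0 ->
  3 <= n -> is_clone F -> Delta_s F n -> Inv F H ->
  a \in Hat H p -> n <= #|Hat H q| ->
  weakly_separates H p q a -> strongly_separates H p q a.
Proof.
move=> _ _ _ n3 _ [i Di] Inv_H _ nHq [h1 [h2 [h1H h2H h1p h2p c12]]] b bHq.
set c1 := h1 q in c12 *; set c2 := h2 q in c12 *.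
have [bc1|bc1] := eqVneq b c1; first by exists h1.
have [bc2|bc2] := eqVneq b c2; first by exists h2.
set U := [set c1; c2; b].
have cU : #|U| = 3.
  rewrite /U -setUA cardsU1 cardsU1 cards1 !inE (negbTE c12) eq_sym (negbTE bc1).
  by rewrite eq_sym bc2.
have UH : U \subset Hat H q.
  apply/subsetP => x; rewrite !inE => /orP [/orP [] |] /eqP ->; apply/imsetP.
  - by exists h1.
  - by exists h2.
  - by move/imsetP: bHq => [g gH ->]; exists g.
have : n - 3 <= #|Hat H q :\: U| by rewrite cardsD (setIidPr UH) cU leq_sub2r.
case/card_geqP => r [ur sr rsub].
pose s := [:: c1, c2, b & r].
have us : uniq s.
  rewrite /s /= ur !inE !negb_or c12 eq_sym bc1 eq_sym bc2 /= andbT.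
  apply/and3P; split; apply/negP => /rsub; rewrite in_setD /U !inE eqxx ?orbT //.
have ss : size s = n by rewrite /s /= sr; lia.
have sH : {subset s <= Hat H q}.
  move=> x; rewrite /s !in_cons; case/or4P => [/eqP->|/eqP->|/eqP->|/rsub];
    try (apply: (subsetP UH); rewrite /U !inE eqxx ?orbT //).
  by rewrite in_setD => /andP [].
have o0n : 0 < n by lia.
have o1n : 1 < n by lia.
have o2n : 2 < n by lia.
pose o0 := Ordinal o0n; pose o1 := Ordinal o1n; pose o2 := Ordinal o2n.
pose pi := tperm i o0.
pose x k := nth c1 s (pi k).
pose j := pi o1.
have xi : x i = c1 by rewrite /x /pi tpermL.
have xj : x j = c2 by rewrite /x /j tpermK.
have ji : j != i.
  apply/eqP => eji; have : pi j = pi i by rewrite eji.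
  by rewrite /j tpermK /pi tpermL.
have xinj : injective x.
  move=> k l; rewrite /x => /eqP; rewrite nth_uniq ?ss ?ltn_ord //.
  by move/eqP/val_inj/perm_inj.
have xH k : x k \in Hat H q by apply: sH; rewrite mem_nth // ss ltn_ord.
pose kf k := if k == i then h1 else if k == j then h2
  else odflt h1 [pick h in H | h q == x k].
have kfH k : kf k \in H /\ kf k q = x k.
  rewrite /kf; case: eqP => [->|_]; first by rewrite xi.
  case: eqP => [->|_]; first by rewrite xj.
  case: pickP => [h /andP [hH /eqP ->] //|/= none].
  by move/imsetP: (xH k) => [g gH gq]; move: (none g); rewrite gH -gq eqxx.
have eqq : (fun k => kf k q) =1 x by move=> k; case: (kfH k).
have ranq : ran (fun k => kf k q) = [set x k | k : 'I_n].
  by apply: eq_imset.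
have cardq : #|ran (fun k => kf k q)| = n.
  by rewrite ranq card_imset // card_ord.
have bran : b \in ran (fun k => kf k q).
  rewrite ranq; apply/imsetP; exists (pi o2) => //.
  by rewrite /x tpermK.
have [s0 [Fs0 [s0q s0p]]] := Di _ cardq b bran.
exists [ffun r => s0 (fun k => kf k r)].
  by apply: Inv_H => // k; case: (kfH k).
rewrite !ffunE; split => //.
rewrite s0p; first by rewrite /kf eqxx.
have : #|ran (fun k => kf k p)| != #|'I_n|.
  apply/negP => /imset_injP inj.
  have := inj i j; rewrite !inE /kf eqxx (negbTE ji) eqxx h1p h2p.
  by move=> /(_ isT isT erefl) /eqP; rewrite eq_sym (negbTE ji).
rewrite card_ord ltn_neqAle => -> /=.
by rewrite -[n in _ <= n]card_ord leq_imset_card.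
Qed.
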